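(* Let $\gamma,\lambda\in\mathbb{C}$ be generic and consider the six equations on cube vertex values $(u_0,u_1,u_2,u_{12},v_0,v_1,v_2,v_{12})$: \[ \mathcal A:\ \frac{u_{12}}{u_0}-\frac{(\gamma u_2-1)(\gamma-u_1)}{(\gamma-u_2)(\gamma u_1-1)}=0,\qquad \mathcal S:\ (1-\gamma u_1)(\lambda+\gamma v_2)-(\gamma-u_1)(\gamma-v_{12})u_0v_2=0, \] \[ \mathcal B:\ (\lambda+\gamma v_2-u_0v_2)(1-\gamma u_0+u_0v_0)+(1-\gamma^2-\lambda)u_0v_0=0, \] \[ \mathcal B':\ (\lambda+\gamma v_{12}-u_1v_{12})(1-\gamma u_1+u_1v_1)+(1-\gamma^2-\lambda)u_1v_1=0, \] \[ \mathcal C:\ (1-\gamma u_0)(\lambda+\gamma v_0)-(\gamma-u_0)(\gamma-v_1)u_1v_0=0,\qquad \mathcal C':\ (1-\gamma u_2)(\lambda+\gamma v_2)-(\gamma-u_2)(\gamma-v_{12})u_{12}v_2=0. \] For generic $u_0,u_1,u_2,v_0$, solve $\mathcal A=0$ for $u_{12}$, $\mathcal B=0$ for $v_2$, $\mathcal C=0$ for $v_1$. Then the three expressions for $v_{12}$ obtained from $\mathcal S=0$, $\mathcal B'=0$, $\mathcal C'=0$ coincide as rational functions of $u_0,u_1,u_2,v_0$, and the tetrahedron equations \[ \mathcal K_1:\ \big(\lambda-\gamma\lambda u_0+(1-\gamma^2)u_0v_0\big)\big(1-\gamma^2+\gamma v_{12}-u_1v_{12}\big)+(1-\gamma^2-\lambda)(\gamma-u_0)(1-\gamma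 u_1)v_0=0, \] \[ \mathcal K_2:\ (\lambda+\gamma v_2-u_0v_2)(1-\gamma u_1+u_1v_1)+(1-\gamma^2-\lambda)u_0v_2=0 \] hold identically.
   Context: The lattice sine-Gordon equation is $\frac{u_{l+1,m+1}}{u_{l,m}}=\frac{(\gamma u_{l,m+1}-1)(\gamma-u_{l+1,m})}{(\gamma-u_{l,m+1})(\gamma u_{l+1,m}-1)}$. In the cube, $u_0=u_{l,m}$, $u_1=u_{l+1,m}$, $u_2=u_{l,m+1}$, $u_{12}=u_{l+1,m+1}$, and $v_0,v_1,v_2,v_{12}$ are correspondingly placed values of an auxiliary function $v$. Generic means all denominators appearing are nonzero. *)

(* Defs.v *)
From HB Require Import structures.
From mathcomp Require Import all_boot all_order all_algebra.
From mathcomp Require Import complex.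
From mathcomp Require Import reals.
Set Implicit Arguments. Unset Strict Implicit. Unset Printing Implicit Defensive.
Import Order.TTheory GRing.Theory Num.Theory.
Local Open Scope ring_scope.

Section Eqs.
Variable F : fieldType.
Variables (g l : F).

Definition sgA (u0 u1 u2 u12 : F) : F :=
  u12 / u0 - ((g * u2 - 1) * (g - u1)) / ((g - u2) * (g * u1 - 1)).
Definition sgS (u0 u1 v2 v12 : F) : F :=
  (1 - g * u1) * (l + g * v2) - (g - u1) * (g - v12) * u0 * v2.
Definition sgB (u0 v0 v2 : F) : F :=
  (l + g * v2 - u0 * v2) * (1 - g * u0 + u0 * v0) + (1 - g ^+ 2 - l) * u0 * v0.
Definition sgB' (u1 v1 v12 : F) : F :=
  (l + g * v12 - u1 * v12) * (1 - g * u1 + u1 * v1) + (1 - g ^+ 2 - l) * u1 * v1.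
Definition sgC (u0 u1 v0 v1 : F) : F :=
  (1 - g * u0) * (l + g * v0) - (g - u0) * (g - v1) * u1 * v0.
Definition sgC' (u2 u12 v2 v12 : F) : F :=
  (1 - g * u2) * (l + g * v2) - (g - u2) * (g - v12) * u12 * v2.
Definition sgK1 (u0 u1 v0 v12 : F) : F :=
  (l - g * l * u0 + (1 - g ^+ 2) * u0 * v0) * (1 - g ^+ 2 + g * v12 - u1 * v12)
  + (1 - g ^+ 2 - l) * (g - u0) * (1 - g * u1) * v0.
Definition sgK2 (u0 u1 v1 v2 : F) : F :=
  (l + g * v2 - u0 * v2) * (1 - g * u1 + u1 * v1) + (1 - g ^+ 2 - l) * u0 * v2.
End Eqs.

(* Main.v *)
Require Import Defs.
From HB Require Import structures.
From mathcomp Require Import all_boot all_order all_algebra.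
From mathcomp Require Import complex.
From mathcomp Require Import reals.
From mathcomp Require Import ring.
Import GRing.Theory Num.Theory.
Local Open Scope ring_scope.

Lemma solve_lin (F : fieldType) (a b x : F) : a != 0 -> a * x + b = 0 -> x = - b / a.
Proof. move=> ha h; have -> : b = - (a * x) by rewrite -(subr0 b) -h; ring.
by field; rewrite ha. Qed.

Lemma cross (F : fieldType) (a b c d : F) : b != 0 -> d != 0 -> a * d = c * b -> a / b = c / d.
Proof. move=> hb hd h.
have -> : a / b = (a * d) / (b * d) by field; rewrite hb hd.
by rewrite h; field; rewrite hb hd. Qed.

Lemma zero_of (F : fieldType) (a x : F) : a != 0 -> a * x = 0 -> x = 0.
Proof. by move=> ha /eqP; rewrite mulf_eq0 (negbTE ha) /= => /eqP. Qed.

Theorem mainTheorem10 (R : realType) (g l u0 u1 u2 v0 u12 v1 v2 wS wB wC : R[i]) :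
  u0 != 0 -> (g - u2) * (g * u1 - 1) != 0 ->
  (g - u0) * (1 - g * u0 + u0 * v0) != 0 ->
  (g - u0) * u1 * v0 != 0 ->
  (g - u1) * u0 * v2 != 0 ->
  (g - u1) * (1 - g * u1 + u1 * v1) != 0 ->
  (g - u2) * u12 * v2 != 0 ->
  sgA g u0 u1 u2 u12 = 0 ->
  sgB g l u0 v0 v2 = 0 ->
  sgC g l u0 u1 v0 v1 = 0 ->
  sgS g l u0 u1 v2 wS = 0 ->
  sgB' g l u1 v1 wB = 0 ->
  sgC' g l u2 u12 v2 wC = 0 ->
  [/\ wS = wB, wB = wC,
      sgK1 g l u0 u1 v0 wS = 0 &
      sgK2 g l u0 u1 v1 v2 = 0].
Proof.
move=> h0 hA hB hC hS hB' hC' eA eB eC eS eB' eC'.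
have hA' := hA; have hB0 := hB; have hC0 := hC.
move: hA'; rewrite mulf_eq0 negb_or => /andP[n1 n2].
move: hB0; rewrite mulf_eq0 negb_or => /andP[n3 n4].
move: hC0; rewrite !mulf_eq0 !negb_or => /andP[/andP[_ n5] n6].
have hu12 : u12 = u0 * ((g * u2 - 1) * (g - u1)) / ((g - u2) * (g * u1 - 1)).
  have e : u12 / u0 = ((g * u2 - 1) * (g - u1)) / ((g - u2) * (g * u1 - 1)).
    by apply/eqP; rewrite -subr_eq0; apply/eqP.
  by rewrite -[u12](divfK h0) e; field; rewrite ?n1 ?n2 ?h0.
have hv2 : v2 = - (l * (1 - g * u0 + u0 * v0) + (1 - g ^+ 2 - l) * u0 * v0)
                / ((g - u0) * (1 - g * u0 + u0 * v0)).
  apply: solve_lin => //; rewrite -eB /sgB; ring.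
have hv1 : v1 = - ((1 - g * u0) * (l + g * v0) - (g - u0) * g * u1 * v0)
                / ((g - u0) * u1 * v0).
  apply: solve_lin => //; rewrite -eC /sgC; ring.
have hwS : wS = - ((1 - g * u1) * (l + g * v2) - (g - u1) * g * u0 * v2)
                / ((g - u1) * u0 * v2).
  apply: solve_lin => //; rewrite -eS /sgS; ring.
have hwB : wB = - (l * (1 - g * u1 + u1 * v1) + (1 - g ^+ 2 - l) * u1 * v1)
                / ((g - u1) * (1 - g * u1 + u1 * v1)).
  apply: solve_lin => //; rewrite -eB' /sgB'; ring.
have hwC : wC = - ((1 - g * u2) * (l + g * v2) - (g - u2) * g * u12 * v2)
                / ((g - u2) * u12 * v2).
  apply: solve_lin => //; rewrite -eC' /sgC'; ring.
split.
- rewrite hwS hwB; apply: cross => //.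
  rewrite hv1 hv2; field; rewrite ?n1 ?n2 ?n3 ?n4 ?n5 ?n6 ?h0 //.
- rewrite hwB hwC; apply: cross => //.
  rewrite hv1 hv2 hu12; field; rewrite ?n1 ?n2 ?n3 ?n4 ?n5 ?n6 ?h0 //.
- apply: (@zero_of _ ((g - u1) * u0 * v2) _ hS).
  have -> : (g - u1) * u0 * v2 * sgK1 g l u0 u1 v0 wS =
     (g - u1) * u0 * v2 * sgK1 g l u0 u1 v0 0
     + (sgK1 g l u0 u1 v0 1 - sgK1 g l u0 u1 v0 0) *
       (- ((1 - g * u1) * (l + g * v2) - (g - u1) * g * u0 * v2)).
    move: hS; rewrite !mulf_eq0 !negb_or => /andP[/andP[m1 m2] m3].
    rewrite hwS /sgK1; field; rewrite ?m1 ?m2 ?m3 //.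
  rewrite /sgK1 hv2; field; rewrite ?n1 ?n2 ?n3 ?n4 ?n5 ?n6 ?h0 //.
- rewrite /sgK2 hv1 hv2; field; rewrite ?n1 ?n2 ?n3 ?n4 ?n5 ?n6 ?h0 //.
Qed.
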